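(* Let $\mathfrak g=\mathfrak k\oplus\mathfrak m$ be a Pauli-spanned Cartan decomposition of a Lie algebra $\mathfrak g\subseteq\mathfrak{su}(2^n)$, and let $\mathfrak b=\mathrm{span}_{i\mathbb R}\{\tilde b_1,\dots,\tilde b_d\}\subseteq\mathfrak m$ be an Abelian subalgebra spanned by $i$ times pairwise commuting Pauli strings $\tilde b_1,\dots,\tilde b_d\in\tilde{\mathfrak m}$, all belonging to the same connected component of the frustration graph of $\mathfrak g$. Then the $\tilde b_j$ can be ordered so that $$|\tilde{\mathfrak k}^1(\mathfrak b)|>|\tilde{\mathfrak k}^2_1(\mathfrak b)|\ge|\tilde{\mathfrak k}^3_{12}(\mathfrak b)|\ge\cdots\ge|\tilde{\mathfrak k}^d_{1\dots d-1}(\mathfrak b)|,$$ where equality occurs only between empty sets (so the non-empty sets form a strictly decreasing initial segment and all empty sets come at the end). Moreover, if the first $r$ sets are non-empty, the same inequalities hold for any permutation of the first $r$ indices; a general permutation of the indices may cause empty sets to appear earlier in the sequence but does not change the sizes or order of the non-empty sets.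
   Context: Pauli strings on $n$ qubits are tensor products of $I,X,Y,Z$, not all identity; two Pauli strings either commute or anticommute. A Pauli-spanned Cartan decomposition is $\mathfrak g=\mathfrak k\oplus\mathfrak m$ with $\mathfrak k=\mathrm{span}_{i\mathbb R}\tilde{\mathfrak k}$, $\mathfrak m=\mathrm{span}_{i\mathbb R}\tilde{\mathfrak m}$, $\mathfrak g=\mathrm{span}_{i\mathbb R}\tilde{\mathfrak g}$, $\tilde{\mathfrak g}=\tilde{\mathfrak k}\sqcup\tilde{\mathfrak m}$ sets of Pauli strings, and $[\mathfrak k,\mathfrak k]\subseteq\mathfrak k$, $[\mathfrak m,\mathfrak m]\subseteq\mathfrak k$, $[\mathfrak k,\mathfrak m]\subseteq\mathfrak m$. The frustration graph of $\mathfrak g$ has vertex set $\tilde{\mathfrak g}$ and an edge between $\sigma,\tau$ iff $[\sigma,\tau]\ne0$. For disjoint index lists, $\tilde{\mathfrak k}^{i_1i_2\dots}_{j_1j_2\dots}(\mathfrak b)$ is the set of $\tilde k\in\tilde{\mathfrak k}$ that anticommute with every $\tilde b_{i_p}$ and commute with every $\tilde b_{j_q}$ (no condition for other indices); $\tilde{\mathfrak k}^r_{1\dots r-1}$ thus consists of elements commuting with $\tilde b_1,\dots,\tilde b_{r-1}$ and anticommuting with $\tilde b_r$. *)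

(* Defs.v *)
From HB Require Import structures.
From mathcomp Require Import all_boot fingroup perm.
Set Implicit Arguments. Unset Strict Implicit. Unset Printing Implicit Defensive.

(* Pauli strings on n qubits, up to phase, in the binary (x|z) encoding:
   at each qubit (false,false) = I, (true,false) = X, (true,true) = Y,
   (false,true) = Z. *)
Definition pstr (n : nat) := {ffun 'I_n -> bool * bool}.

Definition pid (n : nat) : pstr n := [ffun => (false, false)].

Definition anticomm1 (a b : bool * bool) : bool :=
  [&& a != (false, false), b != (false, false) & a != b].

Definition anticomm n (p q : pstr n) : bool :=
  odd #|[set i | anticomm1 (p i) (q i)]|.

Definition commute_ps n (p q : pstr n) : bool := ~~ anticomm p q.

(* product of Pauli strings up to a phase (so [p,q] is proportional to pmul p q
   when p and q anticommute, and vanishes otherwise) *)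
Definition pmul n (p q : pstr n) : pstr n :=
  [ffun i => ((p i).1 (+) (q i).1, (p i).2 (+) (q i).2)].

(* g = k (+) m Pauli-spanned Cartan decomposition, given by the Pauli sets
   K = k~ and M = m~ (disjoint, not containing the identity).  Since distinct
   Pauli strings are linearly independent and [s,t] = 2 s t (or 0), the
   inclusions [k,k]<=k, [m,m]<=k, [k,m]<=m unfold to the following. *)
Definition pauli_cartan n (K M : {set pstr n}) : Prop :=
  [/\ [disjoint K & M], pid n \notin K & pid n \notin M] /\
  [/\ {in K &, forall p q, anticomm p q -> pmul p q \in K},
       {in M &, forall p q, anticomm p q -> pmul p q \in K} &
       {in K & M, forall p q, anticomm p q -> pmul p q \in M}].

Definition frustration n (K M : {set pstr n}) : rel (pstr n) :=
  fun p q => [&& p \in K :|: M, q \in K :|: M & anticomm p q].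

(* k~^r_{1..r-1}(b): elements of K anticommuting with b r and commuting with
   b i for all i < r (indices 0-based) *)
Definition kset n d (K : {set pstr n}) (b : 'I_d -> pstr n) (r : 'I_d)
  : {set pstr n} :=
  [set k in K | anticomm k (b r) &&
                [forall i : 'I_d, (i < r) ==> commute_ps k (b i)]].

Definition ksizes n d (K : {set pstr n}) (b : 'I_d -> pstr n) : seq nat :=
  [seq #|kset K b r| | r <- enum 'I_d].

Definition chain_ok (a : seq nat) : Prop :=
  (1 < size a -> nth 0 a 1 < nth 0 a 0) /\
  forall i, i.+1 < size a ->
    nth 0 a i.+1 <= nth 0 a i /\ (nth 0 a i.+1 = nth 0 a i -> nth 0 a i = 0).

(* Main.v *)
Require Import Defs.
From mathcomp Require Import all_boot fingroup perm.
Set Implicit Arguments. Unset Strict Implicit. Unset Printing Implicit Defensive.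

Lemma ac1E (a b : bool * bool) : anticomm1 a b = (a.1 && b.2) (+) (a.2 && b.1).
Proof. by case: a => [[] []]; case: b => [[] []]. Qed.

Lemma odd_count_xor (T : Type) (f g : pred T) s :
  odd (count (fun x => f x (+) g x) s) = odd (count f s) (+) odd (count g s).
Proof.
elim: s => //= x s IH; rewrite !oddD IH.
by case: (f x); case: (g x); case: (odd (count f s)); case: (odd (count g s)).
Qed.

Lemma card_set_count n (P : pred 'I_n) : #|[set i | P i]| = count P (enum 'I_n).
Proof. by rewrite cardsE cardE enumT /enum_mem -size_filter; congr size; apply: eq_filter. Qed.

Lemma acE n (p q : pstr n) :
  anticomm p q = odd (count (fun i => anticomm1 (p i) (q i)) (enum 'I_n)).
Proof. by rewrite /anticomm card_set_count. Qed.

Lemma acC n (p q : pstr n) : anticomm p q = anticomm q p.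
Proof. rewrite !acE; congr odd; apply: eq_count => i; rewrite !ac1E; 
  by case: (p i) => [[] []]; case: (q i) => [[] []]. Qed.

Lemma acDl n (p q r : pstr n) : anticomm (pmul p q) r = anticomm p r (+) anticomm q r.
Proof.
rewrite !acE -odd_count_xor; congr odd; apply: eq_count => i.
rewrite !ac1E /pmul ffunE /=.
by case: (p i) => [[] []]; case: (q i) => [[] []]; case: (r i) => [[] []].
Qed.

Lemma acDr n (p q r : pstr n) : anticomm r (pmul p q) = anticomm r p (+) anticomm r q.
Proof. by rewrite acC acDl !(acC r). Qed.

Lemma acxx n (p : pstr n) : anticomm p p = false.
Proof.
rewrite acE (eq_count (a2 := pred0)) ?count_pred0 // => i.
by rewrite ac1E /=; case: (p i) => [[] []].
Qed.

Lemma pmulC n (p q : pstr n) : pmul p q = pmul q p.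
Proof. by apply/ffunP => i; rewrite !ffunE addbC [X in (_, X)]addbC. Qed.

Lemma pmulA n (p q r : pstr n) : pmul p (pmul q r) = pmul (pmul p q) r.
Proof. by apply/ffunP => i; rewrite !ffunE /= !addbA. Qed.

Lemma pmulKl n (p q : pstr n) : pmul p (pmul p q) = q.
Proof. apply/ffunP => i; rewrite !ffunE /= !addbA !addbb /=. by case: (q i). Qed.

Section Main.
Variables (n d : nat) (K M : {set pstr n}) (b : 'I_d -> pstr n).
Hypothesis HC : pauli_cartan K M.
Hypothesis HbM : forall i, b i \in M.
Hypothesis Hcom : forall i j, commute_ps (b i) (b j).
Hypothesis Hconn : forall i j, connect (frustration K M) (b i) (b j).

Local Notation G := (K :|: M).
Local Notation ac p i := (anticomm p (b i)).

Lemma bb i j : anticomm (b i) (b j) = false.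
Proof. by apply/negbTE; apply: Hcom. Qed.

Lemma clKK p q : p \in K -> q \in K -> anticomm p q -> pmul p q \in K.
Proof. by case: HC => _ [h _ _]; apply: h. Qed.
Lemma clMM p q : p \in M -> q \in M -> anticomm p q -> pmul p q \in K.
Proof. by case: HC => _ [_ h _]; apply: h. Qed.
Lemma clKM p q : p \in K -> q \in M -> anticomm p q -> pmul p q \in M.
Proof. by case: HC => _ [_ _ h]; apply: h. Qed.
Lemma clMK p q : p \in M -> q \in K -> anticomm p q -> pmul p q \in M.
Proof. by move=> hp hq h; rewrite pmulC; apply: clKM => //; rewrite acC. Qed.

Lemma clG p q : p \in G -> q \in G -> anticomm p q -> pmul p q \in G.
Proof.
rewrite !inE => /orP[hp|hp] /orP[hq|hq] h.
- by rewrite clKK.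
- by rewrite clKM ?orbT.
- by rewrite clMK ?orbT.
- by rewrite clMM.
Qed.

Definition gT (T : seq 'I_d) p := (p \in G) && all (fun l => ~~ ac p l) T.

Lemma gT_mul T p q : gT T p -> gT T q -> anticomm p q -> gT T (pmul p q).
Proof.
case/andP=> hp ap /andP[hq aq] h; rewrite /gT clG //=.
apply/allP => l lT; rewrite acDl.
by rewrite (negbTE (allP ap l lT)) (negbTE (allP aq l lT)).
Qed.

Lemma gT_b T i : gT T (b i).
Proof. by rewrite /gT inE HbM orbT /=; apply/allP => l _; rewrite bb. Qed.

Definition Pr i y := exists x, [/\ x \in G, ac x i & anticomm x y].

Lemma path_step i s y : path (frustration K M) y s -> (y = b i \/ Pr i y) ->
  last y s = b i \/ Pr i (last y s).
Proof.
elim: s y => //= z s IH y /andP[e hp] hy; apply: IH => //; right.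
move: e; rewrite /frustration => /and3P[yG zG ayz].
case: hy => [Ey|[x [xG xi xy]]].
  subst y; exists (pmul z (b i)); split.
  - by apply: clG => //; rewrite acC.
  - by rewrite acDl bb (acC z) ayz.
  - by rewrite acDl acxx ayz.
case xz: (anticomm x z); first by exists x.
case yi: (ac y i); first by exists y.
exists (pmul x y); split.
- by apply: clG.
- by rewrite acDl xi yi.
- by rewrite acDl xz ayz.
Qed.

Lemma H0 i j : (exists a, a \in G /\ ac a i) -> exists x, [/\ x \in G, ac x i & ac x j].
Proof.
move=> [a [aG ai]].
case e: (b i == b j).
  by exists a; split => //; rewrite -(eqP e).
have /connectP[s hp hl] := Hconn i j.
have := path_step hp (or_introl erefl); rewrite -hl => -[h|[x [xG xi xj]]].
  by rewrite h eqxx in e.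
by exists x.
Qed.

Lemma gT_cons l T p : gT (l :: T) p = ~~ ac p l && gT T p.
Proof. by rewrite /gT /= andbCA. Qed.

Ltac acn := rewrite ?acDl ?acDr ?acxx ?bb ?addbF ?addFb; rewrite ?(acC (b _)).

Lemma HT T i j : (exists a, gT T a && ac a i) -> (exists c, gT T c && ac c j) ->
  exists x, gT T x && ac x i && ac x j.
Proof.
elim: T i j => [|l T IH] i j.
  move=> [a /andP[ga ai]] _.
  have [|x [xG xi xj]] := @H0 i j.
    by exists a; move: ga; rewrite /gT andbT.
  by exists x; rewrite /gT xG xi xj.
move=> [a /andP[ga ai]] [c /andP[gc cj]].
have ga' := ga; have gc' := gc.
rewrite gT_cons in ga; rewrite gT_cons in gc; case/andP: ga => al ga; case/andP: gc => cl gc.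
move/negbTE: al => al; move/negbTE: cl => cl.
have [x /andP[/andP[gx xi] xj]] := IH i j (ex_intro _ a (introT andP (conj ga ai)))
   (ex_intro _ c (introT andP (conj gc cj))).
case xl: (ac x l); last by exists x; rewrite gT_cons xl gx xi xj.
case aj: (ac a j); first by exists a; rewrite ga' ai aj.
case ci: (ac c i); first by exists c; rewrite gc' ci cj.
case acc: (anticomm a c).
  exists (pmul a c); rewrite gT_mul //=; acn; by rewrite ai ci aj cj.
pose x1 := if anticomm x a then x else pmul x (b i).
have [gx1 x1i x1j x1l] : [/\ gT T x1, ac x1 i, ac x1 j & ac x1 l].
  rewrite /x1; case xa: (anticomm x a); first by split.
  split; try (by apply: gT_mul => //; apply: gT_b); acn; by rewrite ?xi ?xj ?xl ?xa ?ai ?ci.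
have [x1a x1c] : anticomm x1 a /\ anticomm x1 c = anticomm x c.
  rewrite /x1; case xa: (anticomm x a); first by split.
  split; acn; rewrite ?xi ?xj ?xl ?xa ?ai ?ci /= ?addbF //.
pose x2 := if anticomm x1 c then x1 else pmul x1 (b j).
have [gx2 x2i x2j x2l] : [/\ gT T x2, ac x2 i, ac x2 j & ac x2 l].
  rewrite /x2; case xc: (anticomm x1 c); first by split.
  split; try (by apply: gT_mul => //; apply: gT_b); acn; by rewrite ?x1i ?x1j ?x1l ?xc ?x1a ?aj ?cj.
have [x2a x2c] : anticomm x2 a /\ anticomm x2 c.
  rewrite /x2; case xc: (anticomm x1 c); first by split.
  split; acn; rewrite ?x1i ?x1j ?x1l ?xc ?x1a ?aj ?cj /= ?addbF //.
have gy : gT T (pmul x2 a) by apply: gT_mul.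
have gw : gT T (pmul (pmul x2 a) c) by apply: gT_mul => //; acn; rewrite x2c acc.
have gz : gT T (pmul x2 (b l)) by apply: gT_mul => //; apply: gT_b.
exists (pmul (pmul x2 (b l)) (pmul (pmul x2 a) c)).
have zw : anticomm (pmul x2 (b l)) (pmul (pmul x2 a) c).
  by acn; rewrite x2a x2c al cl x2l /=.
rewrite gT_cons gT_mul //=; acn.
by rewrite x2l x2i x2j al cl ai ci aj cj.
Qed.

Definition KT T := [set k in K | all (fun l => ~~ ac k l) T].
Definition Aset i := [set p | ac p i].

Lemma KT_gT T k : k \in KT T -> gT T k.
Proof. by rewrite inE /gT inE => /andP[-> ->]. Qed.

Lemma toK T x i : gT T x -> ac x i -> exists k, k \in KT T /\ forall t, ac k t = ac x t.
Proof.
case/andP; rewrite inE => /orP[xK|xM] ax xi.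
  by exists x; split => //; rewrite inE xK.
have kK : pmul x (b i) \in K by apply: clMM.
have e : forall t, ac (pmul x (b i)) t = ac x t by move=> t; rewrite acDl bb addbF.
exists (pmul x (b i)); split => //; rewrite inE kK /=.
by rewrite (eq_all (a2 := fun l => ~~ ac x l)) // => l; rewrite e.
Qed.

Definition phi (k p : pstr n) := if anticomm p k then pmul k p else p.

Lemma phi_ac k p q : anticomm (phi k p) (phi k q) = anticomm p q.
Proof.
rewrite /phi; case pk: (anticomm p k); case qk: (anticomm q k);
  rewrite ?acDl ?acDr ?acxx ?(acC k p) ?(acC k q) ?pk ?qk //=;
  by rewrite ?negbK.
Qed.

Lemma phiK k : involutive (phi k).
Proof.
move=> p; rewrite /phi; case pk: (anticomm p k) => /=; last by rewrite pk.
rewrite acDl acxx pk /=; exact: pmulKl.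
Qed.

Lemma phi_K k p : k \in K -> p \in K -> phi k p \in K.
Proof. by move=> kK pK; rewrite /phi; case: ifP => // h; apply: clKK => //; rewrite acC. Qed.

Lemma E_le T i j k : k \in KT T -> ac k i -> ac k j ->
  #|KT T :&: Aset i| <= #|KT T :&: Aset j|.
Proof.
rewrite inE => /andP[kK kT] ki kj.
pose k' := pmul (pmul k (b i)) (b j).
have k'K : k' \in K.
  apply: clMM; first by apply: clKM.
  - by rewrite HbM.
  - by rewrite acDl bb addbF.
pose psi p := phi k' (phi k p).
have psiI : injective psi.
  by apply: (can_inj (g := fun p => phi k (phi k' p))) => p; rewrite /psi !phiK.
have psiac p q : anticomm (psi p) (psi q) = anticomm p q by rewrite /psi !phi_ac.
have psibi : psi (b i) = b j.
  rewrite /psi /phi (acC (b i)) ki.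
  have -> : anticomm (pmul k (b i)) k' by rewrite /k'; acn; rewrite ki kj.
  by apply/ffunP => t; rewrite /k' !ffunE /=; case: (k t) => [[] []]; case: (b i t) => [[] []];
     case: (b j t) => [[] []].
have psibl l : l \in T -> psi (b l) = b l.
  move=> lT; have kl : ac k l = false by apply/negbTE; apply: (allP kT).
  rewrite /psi /phi (acC (b l)) kl.
  by have -> : anticomm (b l) k' = false by rewrite /k'; acn; rewrite kl.
rewrite -(card_imset _ psiI); apply: subset_leq_card; apply/subsetP => q.
case/imsetP => p; rewrite !inE => /andP[/andP[pK pT] pi] ->.
rewrite /psi phi_K ?phi_K //=.
rewrite -psibi -/(psi p) psiac pi andbT.
apply/allP => l lT; rewrite -(psibl l lT) psiac; exact: (allP pT).
Qed.

Lemma common T i j : (exists a, a \in KT T :&: Aset i) -> (exists c, c \in KT T :&: Aset j) ->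
  exists k, [/\ k \in KT T, ac k i & ac k j].
Proof.
move=> [a]; rewrite !inE => /andP[/andP[aK aT] ai] [c]; rewrite !inE => /andP[/andP[cK cT] cj].
have [|| x /andP[/andP[gx xi] xj]] := @HT T i j.
- by exists a; rewrite /gT inE aK aT ai.
- by exists c; rewrite /gT inE cK cT cj.
have [k [kT e]] := toK gx xi.
by exists k; rewrite !e.
Qed.

Lemma E T i j : (exists a, a \in KT T :&: Aset i) -> (exists c, c \in KT T :&: Aset j) ->
  #|KT T :&: Aset i| = #|KT T :&: Aset j|.
Proof.
move=> ha hc; have [k [kT ki kj]] := common ha hc.
by apply/eqP; rewrite eqn_leq !(E_le kT).
Qed.

Lemma KT_cons l T : KT (l :: T) = KT T :&: [set p | ~~ ac p l].
Proof.
apply/setP => p; rewrite !inE /=.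
by case: (p \in K); case: (ac p l); rewrite /= ?andbT ?andbF.
Qed.

Lemma KT_sub l T : KT (l :: T) \subset KT T.
Proof. by rewrite KT_cons subsetIl. Qed.

Lemma Cv T i j : (exists a, a \in KT T :&: Aset i) -> (exists c, c \in KT (i :: T) :&: Aset j) ->
  #|KT (i :: T) :&: Aset j| < #|KT T :&: Aset i|.
Proof.
move=> ha [c hc].
have hc' : c \in KT T :&: Aset j by move: hc; rewrite KT_cons !inE => /andP[/andP[-> _] ->].
have [k [kT ki kj]] := common ha (ex_intro _ c hc').
rewrite (E ha (ex_intro _ c hc')); apply: proper_card; apply/properP; split.
  by apply/subsetP => p; rewrite KT_cons !inE => /andP[/andP[-> _] ->].
exists k; first by rewrite inE kT inE kj.
by rewrite KT_cons !inE ki /= !andbF.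
Qed.

Fixpoint sz (T L : seq 'I_d) : seq nat :=
  if L is i :: L' then #|KT T :&: Aset i| :: sz (i :: T) L' else [::].

Lemma KT_eq T T' : T =i T' -> KT T = KT T'.
Proof. by move=> e; apply/setP => p; rewrite !inE (eq_all_r e). Qed.

Lemma sz_eq L T T' : T =i T' -> sz T L = sz T' L.
Proof.
elim: L T T' => //= i L IH T T' e; rewrite (KT_eq e); congr (_ :: _); apply: IH.
by move=> x; rewrite !inE e.
Qed.

Lemma size_sz L T : size (sz T L) = size L.
Proof. by elim: L T => //= i L IH T; rewrite IH. Qed.

Definition fz T L := [seq x <- sz T L | x != 0].

Lemma card0_nil (A : {set pstr n}) : #|A| = 0 -> forall p, p \in A = false.
Proof. by move/eqP; rewrite cards_eq0 => /eqP -> p; rewrite inE. Qed.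

Lemma KT_cons_red T i : #|KT T :&: Aset i| = 0 -> KT (i :: T) = KT T.
Proof.
move=> h; apply/setP => p; rewrite KT_cons in_setI; have := card0_nil h p.
by rewrite in_setI; case: (p \in KT T) => //=; rewrite !inE => ->.
Qed.

Lemma swap T i j L : fz T (i :: j :: L) = fz T (j :: i :: L).
Proof.
rewrite /fz /= (@sz_eq L (j :: i :: T) (i :: j :: T)); last first.
  by move=> x; rewrite !inE orbCA.
case hi: (#|KT T :&: Aset i| == 0).
  move/eqP: hi => hi; rewrite (KT_cons_red hi) hi /=.
  have -> : #|KT (j :: T) :&: Aset i| = 0.
    by apply/eqP; rewrite -leqn0 -hi subset_leq_card // setSI // KT_sub.
  by [].
case hj: (#|KT T :&: Aset j| == 0).
  move/eqP: hj => hj; rewrite (KT_cons_red hj) hj /=.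
  have -> : #|KT (i :: T) :&: Aset j| = 0.
    by apply/eqP; rewrite -leqn0 -hj subset_leq_card // setSI // KT_sub.
  by rewrite /= hi.
have ex0 l : (#|KT T :&: Aset l| == 0) = false -> exists a, a \in KT T :&: Aset l.
  move=> h; case: (set_0Vmem (KT T :&: Aset l)) => [e|[x xA]]; [by rewrite e cards0 in h | by exists x].
have e := E (ex0 _ hi) (ex0 _ hj).
have -> : #|KT (i :: T) :&: Aset j| = #|KT (j :: T) :&: Aset i|.
  have e1 := cardsID (Aset i) (KT T :&: Aset j).
  have e2 := cardsID (Aset j) (KT T :&: Aset i).
  have -> : KT (i :: T) :&: Aset j = (KT T :&: Aset j) :\: Aset i.
    by apply/setP => p; rewrite KT_cons in_setD !in_setI; case: (p \in KT T); rewrite //= !inE; case: (ac p i); case: (ac p j).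
  have -> : KT (j :: T) :&: Aset i = (KT T :&: Aset i) :\: Aset j.
    by apply/setP => p; rewrite KT_cons in_setD !in_setI; case: (p \in KT T); rewrite //= !inE; case: (ac p i); case: (ac p j).
  have e3 : KT T :&: Aset j :&: Aset i = KT T :&: Aset i :&: Aset j by rewrite -!setIA (setIC (Aset j)).
  rewrite e3 -e in e1; rewrite -e1 in e2; by move/addnI: e2 => ->.
by rewrite e.
Qed.

Lemma fz_cons T i L L' : fz (i :: T) L = fz (i :: T) L' -> fz T (i :: L) = fz T (i :: L').
Proof. by rewrite /fz /= => ->. Qed.

Lemma move_front x L3 L2 T : fz T (L2 ++ x :: L3) = fz T (x :: L2 ++ L3).
Proof.
elim: L2 T => //= y L2 IH T.
rewrite (fz_cons (L' := x :: L2 ++ L3)) ?IH //.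
exact: swap.
Qed.

Lemma fz_perm L L' T : perm_eq L L' -> fz T L = fz T L'.
Proof.
elim: L L' T => [|x L IH] L' T.
  by move/perm_size; case: L'.
move=> pe; have xL : x \in L' by rewrite -(perm_mem pe) mem_head.
move: pe; case/splitPr: xL => L2 L3 pe.
rewrite move_front; apply: fz_cons; apply: IH.
by rewrite -(perm_cons x); apply: (perm_trans pe); rewrite -cat1s perm_catCA.
Qed.

Definition Rel (x y : nat) := (y < x) || ((y == 0) && (x == 0)).

Lemma zeros L T : (forall j, j \in L -> #|KT T :&: Aset j| = 0) -> all (fun x => x == 0) (sz T L).
Proof.
elim: L T => //= i L IH T h; rewrite h ?mem_head //=; apply: IH => j jL.
apply/eqP; rewrite -leqn0 -(h j); last by rewrite inE jL orbT.
by rewrite subset_leq_card // setSI // KT_sub.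
Qed.

Lemma sorted_zeros s : all (fun x => x == 0) s -> sorted Rel s.
Proof.
have P : forall (s0 : seq nat) x, x = 0 -> all (fun x => x == 0) s0 -> path Rel x s0.
  by elim=> //= y s1 IH x -> /andP[/eqP -> h]; apply: IH.
by case: s => //= x s /andP[/eqP -> h]; apply: P.
Qed.

Lemma exist_good m : forall R0 T, size R0 = m -> exists L, perm_eq L R0 /\ sorted Rel (sz T L).
Proof.
elim: m => [|m IH] R0 T.
  by move/size0nil ->; exists [::].
move=> sR.
case: (boolP (has (fun i => 0 < #|KT T :&: Aset i|) R0)) => [/hasP[i iR ipos]|].
  have [|L' [pL' sL']] := IH (rem i R0) (i :: T); first by rewrite size_rem // sR.
  exists (i :: L'); split.
    by rewrite perm_sym; apply: (perm_trans (perm_to_rem iR)); rewrite perm_cons perm_sym.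
  rewrite /=; case: L' pL' sL' => //= j L'' _ sL'.
  rewrite sL' andbT /Rel.
  case: (posnP #|KT (i :: T) :&: Aset j|) => [->|jpos]; first by rewrite ipos.
  rewrite Cv //.
  - case: (set_0Vmem (KT T :&: Aset i)) => [e|[x xA]]; last by exists x.
    by rewrite e cards0 in ipos.
  - case: (set_0Vmem (KT (i :: T) :&: Aset j)) => [e|[x xA]]; last by exists x.
    by rewrite e cards0 in jpos.
rewrite -all_predC => /allP h.
exists R0; split => //; apply: sorted_zeros; apply: zeros => j jR.
by have := h j jR; rewrite /= lt0n negbK => /eqP.
Qed.

Lemma nonred0 (bI : injective b) i : 1 < d -> 0 < #|KT [::] :&: Aset i|.
Proof.
move=> d2.
have [j ji] : exists j : 'I_d, j != i.
  case: (i =P Ordinal (ltnW d2)) => [e|ne].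
    by exists (Ordinal d2); rewrite e -(inj_eq val_inj).
  by exists (Ordinal (ltnW d2)); apply/eqP => e; apply: ne; rewrite -e.
have bji : b i != b j by apply: contra ji => /eqP /bI ->.
have /connectP[s hp hl] := Hconn i j.
case: s hp hl => [/= _ e|y s /= /andP[e _] _]; first by rewrite e eqxx in bji.
move: e; rewrite /frustration => /and3P[_ yG ay]; rewrite card_gt0; apply/set0Pn.
move: yG; rewrite inE => /orP[yK|yM].
  by exists y; rewrite !inE yK acC ay.
exists (pmul y (b i)); rewrite !inE clMM ?HbM ?acDl ?bb ?addbF //= (acC y) //.
Qed.

Lemma sz_cat T A1 A2 : sz T (A1 ++ A2) = sz T A1 ++ sz (rev A1 ++ T) A2.
Proof.
elim: A1 T => //= i A1 IH T; rewrite IH; congr (_ :: _ ++ _).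
by rewrite rev_cons cat_rcons.
Qed.

Lemma nth_sz L T r x0 : r < size L -> nth 0 (sz T L) r =
  #|[set k in KT T | ac k (nth x0 L r) && all (fun l => ~~ ac k l) (take r L)]|.
Proof.
elim: L T r => //= i L IH T [|r] /= h.
  by apply: eq_card => k; rewrite !inE andbT.
rewrite (IH _ _ h); apply: eq_card => k; rewrite in_set KT_cons in_setI [in RHS]in_set /=.
by rewrite !inE; case: (ac k i); rewrite /= ?andbF ?andbT.
Qed.

Lemma mem_take_enum r (i : 'I_d) : (i \in take r (enum 'I_d)) = (i < r).
Proof.
rewrite -(mem_map val_inj) map_take val_enum_ord take_iota mem_iota /= add0n.
by rewrite leq_min ltn_ord andbT.
Qed.

Lemma mem_drop_enum r (i : 'I_d) : (i \in drop r (enum 'I_d)) = (r <= i).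
Proof.
rewrite -(mem_map val_inj) map_drop val_enum_ord drop_iota mem_iota /= add0n.
case: (leqP r i) => //= ri; rewrite subnKC ?ltn_ord //.
by apply: leq_trans (ltnW (ltn_ord i)).
Qed.

Lemma ksizes_sz (f : 'I_d -> 'I_d) : ksizes K (fun i => b (f i)) = sz [::] (map f (enum 'I_d)).
Proof.
apply: (@eq_from_nth _ 0); first by rewrite size_sz !size_map.
rewrite size_map size_enum_ord => r hr.
rewrite /ksizes (nth_map (Ordinal hr)) ?size_enum_ord //.
have eo : nth (Ordinal hr) (enum 'I_d) r = Ordinal hr by exact: (nth_ord_enum (Ordinal hr) (Ordinal hr)).
rewrite eo (@nth_sz _ _ _ (f (Ordinal hr))) ?size_map ?size_enum_ord //.
rewrite (nth_map (Ordinal hr)) ?size_enum_ord // eo.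
apply: eq_card => k; rewrite /kset !inE andbT -map_take all_map.
congr (_ && (_ && _)).
apply/forallP/allP => [h i|h i].
  by rewrite mem_take_enum => ir; move/implyP: (h i) => /(_ ir).
by apply/implyP => ir; apply: h; rewrite mem_take_enum.
all: by rewrite -enumT size_enum_ord.
Qed.

Lemma perm_map_enum (p : 'S_d) : perm_eq (map p (enum 'I_d)) (enum 'I_d).
Proof.
apply: uniq_perm; [rewrite (map_inj_uniq perm_inj); exact: enum_uniq | exact: enum_uniq | ].
by move=> i; rewrite mem_enum; apply/mapP; exists ((p^-1)%g i); rewrite ?mem_enum ?permKV.
Qed.

Lemma cat_cancel (s1 s2 t : seq nat) : s1 ++ t = s2 ++ t -> s1 = s2.
Proof.
move=> e; have := congr1 size e; rewrite !size_cat => /addIn hs.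
have := congr1 (take (size s1)) e; by rewrite take_size_cat // hs take_size_cat.
Qed.

Lemma chain_from_sorted s0 : sorted Rel s0 -> (1 < size s0 -> 0 < nth 0 s0 0) -> chain_ok s0.
Proof.
move=> hs h0; split.
  move=> h1; have := (sortedP 0 hs) 0 h1; rewrite /Rel => /orP[//|/andP[_ /eqP e]].
  by have := h0 h1; rewrite e.
move=> i hi; have := (sortedP 0 hs) i hi; rewrite /Rel => /orP[lt|/andP[/eqP-> /eqP->]] //.
by split; [apply: ltnW | move=> e; rewrite e ltnn in lt].
Qed.

Lemma main (bI : injective b) : exists s : 'S_d,
    [/\ chain_ok (ksizes K (fun i => b (s i))),
        (forall r : nat, 0 < r <= d ->
           (forall i : 'I_d, i < r -> 0 < #|kset K (fun j => b (s j)) i|) ->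
           forall p : 'S_d, (forall i : 'I_d, r <= i -> p i = i) ->
             chain_ok (ksizes K (fun i => b (s (p i)))))
      & (forall p : 'S_d,
           [seq x <- ksizes K (fun i => b (s (p i))) | x != 0] =
           [seq x <- ksizes K (fun i => b (s i)) | x != 0])].
Proof.
have [L [pL sL]] := @exist_good d (enum 'I_d) [::] (size_enum_ord d).
have : perm_eq L (ord_tuple d) by rewrite val_ord_tuple.
case/tuple_permP => s hL.
have eL : L = map s (enum 'I_d).
  have -> : L = map (fun i => tnth (ord_tuple d) (s i)) (ord_tuple d) by rewrite hL.
  by rewrite val_ord_tuple; apply: eq_map => i; exact: tnth_ord_tuple.
have ch : chain_ok (ksizes K (fun i => b (s i))).
  rewrite ksizes_sz -eL; apply: chain_from_sorted => //.
  rewrite size_sz; case: L {pL sL hL eL} (perm_size pL) => //= j L' hs h.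
  by apply: nonred0; rewrite hs size_enum_ord in h.
have inv (p : {perm 'I_d}) : [seq x <- ksizes K (fun i => b (s (p i))) | x != 0] =
           [seq x <- ksizes K (fun i => b (s i)) | x != 0].
  rewrite !ksizes_sz; have -> : map (fun i => s (p i)) (enum 'I_d) = map s (map p (enum 'I_d)).
    by rewrite -map_comp.
  exact: (fz_perm _ (perm_map s (perm_map_enum p))).
exists s; split => // r /andP[r0 rd] hpos p hp.
suff -> : ksizes K (fun i => b (s (p i))) = ksizes K (fun i => b (s i)) by [].
pose E := enum 'I_d; pose Lp := map p E.
have dropE : drop r Lp = drop r E.
  rewrite /Lp -map_drop; apply: map_id_in => i; rewrite mem_drop_enum; exact: hp.
have takeP : perm_eq (take r Lp) (take r E).
  have := perm_map_enum p; rewrite -/E -/Lp.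
  by rewrite -{1}(cat_take_drop r Lp) -{1}(cat_take_drop r E) dropE perm_cat2r.
set X := map s (take r Lp); set Y := map s (take r E); set Z := map s (drop r E).
have eX : map (fun i => s (p i)) E = X ++ Z.
  rewrite /X /Z -dropE -map_cat cat_take_drop /Lp; exact: map_comp.
have eY : map s E = Y ++ Z by rewrite /Y /Z -map_cat cat_take_drop.
have pXY : perm_eq X Y by apply: perm_map.
have eZ : sz (rev X ++ [::]) Z = sz (rev Y ++ [::]) Z.
  by apply: sz_eq => x; rewrite !cats0 !mem_rev (perm_mem pXY).
rewrite !ksizes_sz -/E eX eY !sz_cat eZ; congr (_ ++ _).
have hf : fz [::] (X ++ Z) = fz [::] (Y ++ Z) := fz_perm [::] (perm_cat pXY (perm_refl Z)).
rewrite /fz !sz_cat !filter_cat eZ in hf; move/cat_cancel: hf => hf.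
have allY : all (fun x => x != 0) (sz [::] Y).
  have -> : sz [::] Y = take r (ksizes K (fun i => b (s i))).
    by rewrite ksizes_sz -/E eY sz_cat take_size_cat // size_sz /Y size_map size_takel // size_enum_ord.
  rewrite /ksizes -map_take all_map; apply/allP => i; rewrite mem_take_enum => ir /=.
  by rewrite -lt0n; exact: hpos.
rewrite (all_filterP allY) in hf.
have sX : size (sz [::] X) = size (sz [::] Y).
  have sE : size E = d by rewrite size_enum_ord.
  have sLp : size Lp = d by rewrite size_map.
  by rewrite !size_sz /X /Y !size_map !size_takel //; rewrite ?sE ?sLp.
have : all (fun x => x != 0) (sz [::] X) by rewrite all_count -size_filter hf sX.
by move/all_filterP => eXf; rewrite -eXf hf.
Qed.
End Main.

Theorem theorem3 (n d : nat) (K M : {set pstr n}) (b : 'I_d -> pstr n) :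
  pauli_cartan K M ->
  injective b ->
  (forall i, b i \in M) ->
  (forall i j, commute_ps (b i) (b j)) ->
  (forall i j, connect (frustration K M) (b i) (b j)) ->
  exists s : 'S_d,
    [/\ chain_ok (ksizes K (fun i => b (s i))),
        (forall r : nat, 0 < r <= d ->
           (forall i : 'I_d, i < r -> 0 < #|kset K (fun j => b (s j)) i|) ->
           forall p : 'S_d, (forall i : 'I_d, r <= i -> p i = i) ->
             chain_ok (ksizes K (fun i => b (s (p i)))))
      & (forall p : 'S_d,
           [seq x <- ksizes K (fun i => b (s (p i))) | x != 0] =
           [seq x <- ksizes K (fun i => b (s i)) | x != 0])].
Proof.
move=> HC bI HbM Hcom Hconn.
exact: (main HC HbM Hcom Hconn bI).
Qed.
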